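(* Let $K=K_1\times\cdots\times K_n$, where each $K_j\subset\mathbb R$ is a non-polar compact set. For each $j$, let $w_j:K_j\to[0,\infty)$ be bounded and Borel measurable with $S(K_j,w_j)>0$. Let $\widehat{w_j}(x)=\lim_{r\to0^+}\sup_{\xi\in(x-r,x+r)\cap K_j}w_j(\xi)$ and $\widehat w(x_1,\dots,x_n)=\prod_j\widehat{w_j}(x_j)$. For $\alpha(i)=(\alpha_1,\dots,\alpha_n)$, let $T^{(K_j)}_{\alpha_j,\widehat{w_j}}$ be the (unique) monic polynomial of degree $\alpha_j$ minimizing $\|\widehat{w_j}Q\|_{K_j}$ over monic $Q$ of degree $\alpha_j$, with $T^{(K_j)}_{0,\widehat{w_j}}=1$. Then $$Q_{\alpha(i)}(x_1,\dots,x_n)=\prod_{j=1}^nT^{(K_j)}_{\alpha_j,\widehat{w_j}}(x_j)$$ belongs to $\mathcal P(\alpha(i))$ and is a weighted Chebyshev polynomial for $\widehat w$ on $K$, i.e. $\|\widehat wQ_{\alpha(i)}\|_K=\inf\{\|\widehat wP\|_K:P\in\mathcal P(\alpha(i))\}$, the infimum being over complex coefficients.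
   Context: Monomials $x^\alpha=x_1^{\alpha_1}\cdots x_n^{\alpha_n}$, $\alpha\in\mathbb N_0^n$, are enumerated as $e_0=1,e_1,e_2,\dots$ with $e_i=x^{\alpha(i)}$. The enumeration is such that $|\alpha(i)|=\alpha_1+\dots+\alpha_n$ is non-decreasing in $i$. Among multi-indices of equal length it is ordered lexicographically: for $|\alpha|=|\beta|$, $\beta\prec\alpha$ iff for some $l$ one has $\alpha_l<\beta_l$ and $\alpha_k=\beta_k$ for all $k<l$. $\mathcal P(\alpha(i))$ denotes the set of polynomials of the form $e_i+\sum_{j<i}c_je_j$ with $c_j\in\mathbb C$. $\|\cdot\|_K$ is the sup norm on $K$. $S(K_j,w_j)=\exp[\int\log w_j\,d\mu_{K_j}]$, where $\mu_{K_j}$ is the equilibrium measure of $K_j$. *)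

(* Defs.v *)
From HB Require Import structures.
From mathcomp Require Import all_boot all_order all_algebra.
From mathcomp Require Import mpoly.
From mathcomp Require Import all_classical all_reals all_analysis.
From mathcomp Require Import complex.
Set Implicit Arguments. Unset Strict Implicit. Unset Printing Implicit Defensive.
Import Order.TTheory GRing.Theory Num.Theory.
Import numFieldNormedType.Exports.
Local Open Scope classical_set_scope.
Local Open Scope ring_scope.

Section PotentialTheory.
Context {R : realType}.

Definition log_kernel (x y : R) : \bar R :=
  if x == y then +oo%E else (- ln `|x - y|)%:E.

Definition prob_on (K : set R) (mu : probability R R) : Prop :=
  mu (~` K) = 0%E.

Definition log_energy (K : set R) (mu : probability R R) : \bar R :=
  (\int[mu]_(x in K) \int[mu]_(y in K) log_kernel x y)%E.

Definition nonpolar (K : set R) : Prop :=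
  exists mu : probability R R, prob_on K mu /\ (log_energy K mu < +oo)%E.

Definition equilibrium_measure (K : set R) (mu : probability R R) : Prop :=
  prob_on K mu /\
  forall nu : probability R R, prob_on K nu -> (log_energy K mu <= log_energy K nu)%E.

(* S(K,w) = exp[ \int log w dmu_K ]  (extended reals; log 0 = -oo) *)
Definition S_weight (K : set R) (w : R -> R) (muK : probability R R) : \bar R :=
  expeR (\int[muK]_(x in K) lne (w x)%:E)%E.

Definition what (K : set R) (w : R -> R) (x : R) : R :=
  let f := fun r : R => sup [set w xi | xi in K `&` `](x - r), (x + r)[%classic] in
  lim (f @ 0^'+).

End PotentialTheory.

Section Chebyshev.
Context {R : realType}.
Local Notation C := (R[i]).
Local Notation normc := (@ComplexField.Normc.normc R).
Local Notation rC x := (real_complex R x).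

Definition wnorm1 (K : set R) (f : R -> R) (p : {poly C}) : R :=
  sup [set f x * normc p.[rC x] | x in K].

Variable n : nat.

Definition Kprod (K : 'I_n -> set R) : set ('I_n -> R) :=
  [set x | forall j, K j (x j)].

Definition wnormn (K : 'I_n -> set R) (W : ('I_n -> R) -> R)
    (P : mpoly.mpoly n C) : R :=
  sup [set W x * normc (mpoly.meval (fun j => rC (x j)) P) | x in Kprod K].

(* the enumeration order on multi-indices: b comes strictly before a *)
Definition mprec (b a : mpoly.multinom n) : bool :=
  (mpoly.mdeg b < mpoly.mdeg a)%N ||
  ((mpoly.mdeg b == mpoly.mdeg a) &&
   [exists l : 'I_n, (tnth (mpoly.multinom_val a) l < tnth (mpoly.multinom_val b) l)%N &&
      [forall k : 'I_n, (k < l)%N ==> (tnth (mpoly.multinom_val a) k == tnth (mpoly.multinom_val b) k)]]).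

(* P(a) : polynomials e_a + sum_{b before a} c_b e_b, c_b complex *)
Definition Pset (a : mpoly.multinom n) : set (mpoly.mpoly n C) :=
  [set P | mpoly.mcoeff a P = 1 /\
     forall b, b != a -> ~~ mprec b a -> mpoly.mcoeff b P = 0].

Definition cheb_product (T : 'I_n -> {poly C}) : mpoly.mpoly n C :=
  \prod_(j < n)
     (map_poly (@mpoly.mpolyC n C) (T j)).[mpoly.mpolyX C (mpoly.mnm1 j)].

End Chebyshev.

(* Main.v *)
Require Import Defs.
From HB Require Import structures.
From mathcomp Require Import all_boot all_order all_algebra.
From mathcomp Require Import mpoly.
From mathcomp Require Import all_classical all_reals all_analysis.
From mathcomp Require Import complex.
From mathcomp Require Import ring lra.
Import Order.TTheory GRing.Theory Num.Theory.
Import numFieldNormedType.Exports.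
Local Open Scope classical_set_scope.
Local Open Scope ring_scope.

Set Implicit Arguments. Unset Strict Implicit. Unset Printing Implicit Defensive.
Section P1.
Variable (R : realType) (n : nat).
Local Notation C := (R[i]).

Definition boxle (b a : mpoly.multinom n) := forall i, (b i <= a i)%N.

Lemma F_expand (T : {poly C}) (j : 'I_n) :
  (map_poly (@mpoly.mpolyC n C) T).[mpoly.mpolyX C (mpoly.mnm1 j)] =
  \sum_(k < size T) T`_k *: mpoly.mpolyX C (mpoly.mnm1 j *+ k)%MM.
Proof.
rewrite horner_coef size_map_poly; apply: eq_bigr => k _.
by rewrite coef_map /= mpolyXn mul_mpolyC.
Qed.


Lemma F_supp (T : {poly C}) (j : 'I_n) m :
  m \in mpoly.msupp (map_poly (@mpoly.mpolyC n C) T).[mpoly.mpolyX C (mpoly.mnm1 j)] ->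
  exists2 k, (k < size T)%N & m = (mpoly.mnm1 j *+ k)%MM.
Proof.
rewrite F_expand => /msupp_sum_le /flattenP [s /mapP [k _ ->]] /msuppZ_le.
by rewrite msuppX inE => /eqP ->; exists k.
Qed.

Lemma F_coef (T : {poly C}) (j : 'I_n) k :
  (k < size T)%N ->
  mpoly.mcoeff (mpoly.mnm1 j *+ k)%MM
     (map_poly (@mpoly.mpolyC n C) T).[mpoly.mpolyX C (mpoly.mnm1 j)] = T`_k.
Proof.
move=> kT; rewrite F_expand raddf_sum /= (bigD1 (Ordinal kT)) //= big1 ?addr0.
  by rewrite mcoeffZ mcoeffX eqxx mulr1.
move=> i /eqP ne; rewrite mcoeffZ mcoeffX.
case: eqP; rewrite ?mulr0 // => /mnmP /(_ j); rewrite !mulmnE !mnm1E eqxx !mul1n.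
by move=> e; case: ne; apply: val_inj.
Qed.


Lemma mdeg_mnm1n (j : 'I_n) k : mpoly.mdeg (mpoly.mnm1 j *+ k)%MM = k.
Proof. by rewrite mdegMn mdeg1 mul1n. Qed.

Lemma F_mlead (T : {poly C}) (j : 'I_n) :
  T \is monic ->
  let F := (map_poly (@mpoly.mpolyC n C) T).[mpoly.mpolyX C (mpoly.mnm1 j)] in
  mpoly.mlead F = (mpoly.mnm1 j *+ (size T).-1)%MM /\ mpoly.mleadc F = 1.
Proof.
move=> mT F.
have sT : (0 < size T)%N by rewrite lt0n size_poly_eq0 monic_neq0.
have cF : F@_(mpoly.mnm1 j *+ (size T).-1)%MM = 1.
  by rewrite F_coef ?prednK // -lead_coefE (monicP mT).
have nzF : F != 0.
  by apply/eqP => F0; move: cF; rewrite F0 mcoeff0 => /eqP; rewrite eq_sym oner_eq0.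
have inF : (mpoly.mnm1 j *+ (size T).-1)%MM \in mpoly.msupp F.
  by rewrite mcoeff_msupp cF oner_eq0.
have [k kT Ek] := F_supp (mlead_supp nzF).
have le1 := msupp_le_mlead inF.
have := lemc_mdeg le1; rewrite Ek !mdeg_mnm1n => le2.
have ek : k = (size T).-1 by apply/eqP; rewrite eqn_leq le2 andbT -ltnS prednK.
by rewrite ek -cF; split.
Qed.


Definition Fj (T : 'I_n -> {poly C}) j :=
  (map_poly (@mpoly.mpolyC n C) (T j)).[mpoly.mpolyX C (mpoly.mnm1 j)].

Lemma prod_supp (T : 'I_n -> {poly C}) (s : seq 'I_n) m :
  m \in mpoly.msupp (\prod_(j <- s) Fj T j) ->
  boxle m (\sum_(j <- s) mpoly.mnm1 j *+ (size (T j)).-1)%MM.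
Proof.
elim: s m => [|j s IH] m.
  by rewrite !big_nil msupp1 inE => /eqP -> i; rewrite mnm0E.
rewrite !big_cons => /msuppM_le /allpairsP [[m1 m2] /= [h1 h2 ->]] i.
rewrite !mnmDE; apply: leq_add; last exact: IH.
have [k kT ->] := F_supp h1.
rewrite !mulmnE leq_mul2l; apply/orP; right.
by rewrite -ltnS prednK // (leq_ltn_trans _ kT).
Qed.

Lemma sum_alpha (alpha : mpoly.multinom n) (T : 'I_n -> {poly C}) :
  (forall j, size (T j) = (tnth (mpoly.multinom_val alpha) j).+1) ->
  (\sum_(j < n) mpoly.mnm1 j *+ (size (T j)).-1)%MM = alpha.
Proof.
move=> hs; rewrite [RHS]multinomUE_id; apply: eq_bigr => j _.
by rewrite hs.
Qed.

Lemma box_prec (a b : mpoly.multinom n) : boxle b a -> b != a -> mprec b a.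
Proof.
move=> hb ne; apply/orP; left.
have [i ni] : exists i, b i != a i.
  apply/existsP; apply: contraR ne => /existsPn h; apply/eqP/mnmP => i.
  by apply/eqP; move: (h i); rewrite negbK.
rewrite !mdegE (bigD1 i) //= [X in (_ < X)%N](bigD1 i) //=.
rewrite -addSn leq_add //; first by rewrite ltn_neqAle ni hb.
by apply: leq_sum => k _; apply: hb.
Qed.

Lemma cheb_Pset (alpha : mpoly.multinom n) (T : 'I_n -> {poly C}) :
  (forall j, T j \is monic /\ size (T j) = (tnth (mpoly.multinom_val alpha) j).+1) ->
  Pset alpha (cheb_product T).
Proof.
move=> hT.
have hs : forall j, size (T j) = (tnth (mpoly.multinom_val alpha) j).+1.
  by move=> j; case: (hT j).
have E : cheb_product T = \prod_(j <- index_enum 'I_n) Fj T j by [].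
split.
  have -> : alpha = (\sum_(j <- index_enum 'I_n) mpoly.mlead (Fj T j))%MM.
    rewrite -[LHS](sum_alpha hs); apply: eq_bigr => j _.
    by case: (F_mlead j (proj1 (hT j))).
  rewrite E mleadc_prod; apply: big1 => j _.
  by case: (F_mlead j (proj1 (hT j))).
move=> b nb np; apply/eqP; rewrite mcoeff_eq0; apply: contra np => bin.
apply: box_prec nb; rewrite -(sum_alpha hs).
by apply: (prod_supp (s := index_enum 'I_n)); rewrite -E.
Qed.

End P1.

Set Implicit Arguments. Unset Strict Implicit. Unset Printing Implicit Defensive.
Section P2.
Variable (R : realType).

Lemma what_bounds (K : set R) (w : R -> R) (M : R) x :
  (forall y, K y -> 0 <= w y) -> (forall y, K y -> w y <= M) -> K x ->
  0 <= what K w x <= M.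
Proof.
move=> w0 wM Kx.
pose f := fun r : R => sup [set w xi | xi in K `&` `](x - r), (x + r)[%classic].
have inS r : 0 < r -> [set w xi | xi in K `&` `](x - r), (x + r)[%classic] (w x).
  move=> r0; exists x => //; split => //=.
  by rewrite in_itv /=; apply/andP; split; [rewrite ltrBlDr ltrDl | rewrite ltrDl].
have ubS r : has_ubound [set w xi | xi in K `&` `](x - r), (x + r)[%classic].
  by exists M => _ [y [Ky _] <-]; exact: wM.
have fge r : 0 < r -> w x <= f r.
  by move=> r0; apply: ub_le_sup => //; exact: inS.
have fle r : 0 < r -> f r <= M.
  move=> r0; apply: ge_sup; first by exists (w x); exact: inS.
  by move=> _ [y [Ky _] <-]; exact: wM.
have ndf : {in Interval (BRight (0:R)) (BInfty R false) &, nondecreasing_fun f}.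
  move=> r s; rewrite !in_itv /= !andbT => r0 s0 rs.
  apply: sup_le.
  - move=> z [y [Ky]]; rewrite /= in_itv /= => /andP [h1 h2] <-.
    exists (w y); split => //.
    exists y => //; split => //=; rewrite in_itv /=.
    by apply/andP; split; [apply: le_lt_trans h1; rewrite lerB // | apply: (lt_le_trans h2); rewrite lerD].
  - by exists (w x); exact: inS.
  - by split; [exists (w x); exact: inS | exact: ubS].
have lbf : has_lbound (f @` [set` Interval (BRight (0:R)) (BInfty R false)]).
  exists 0 => z [r]; rewrite /= in_itv /= andbT => r0 <-.
  exact: le_trans (w0 _ Kx) (fge _ r0).
have cv := nondecreasing_at_right_cvgr (a := 0) (b := BInfty R false) erefl ndf lbf.
have -> : what K w x = inf (f @` [set` Interval (BRight (0:R)) (BInfty R false)]).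
  by rewrite /what; exact: cvg_lim cv.
apply/andP; split.
  apply: lb_le_inf; first by exists (f 1), 1 => //=; rewrite in_itv /= andbT.
  move=> z [r]; rewrite /= in_itv /= andbT => r0 <-.
  exact: le_trans (w0 _ Kx) (fge _ r0).
apply: le_trans (fle 1 ltr01).
apply: ge_inf => //; by exists 1 => //=; rewrite in_itv /= andbT.
Qed.

End P2.

Set Implicit Arguments. Unset Strict Implicit. Unset Printing Implicit Defensive.
Section P3.
Variable (R : realType).
Local Notation C := (R[i]).
Local Notation normc := (@ComplexField.Normc.normc R).
Local Notation rC x := (real_complex R x).
Local Notation Re := (@complex.Re R).
Local Notation Im := (@complex.Im R).

Lemma Re_le_normc (z : C) : Re z <= normc z.
Proof.
case: z => a b /=; apply: le_trans (ler_norm a) _.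
rewrite -sqrtr_sqr; apply: ler_wsqrtr; rewrite lerDl; exact: sqr_ge0.
Qed.

Lemma normc_ge0 (z : C) : 0 <= normc z.
Proof. by case: z => a b /=; exact: sqrtr_ge0. Qed.

Lemma ReD (z w : C) : Re (z + w) = Re z + Re w.
Proof. by case: z; case: w. Qed.

Lemma ImD (z w : C) : Im (z + w) = Im z + Im w.
Proof. by case: z; case: w. Qed.

Lemma RerCM (t : R) (z : C) : Re (rC t * z) = t * Re z.
Proof. by case: z => a b /=; rewrite !mul0r ?subr0. Qed.

Lemma ImrCM (t : R) (z : C) : Im (rC t * z) = t * Im z.
Proof. by case: z => a b /=; rewrite !mul0r ?addr0. Qed.

Lemma Re_iM (z : C) : Re ('i%C * z) = - Im z.
Proof. by case: z => a b /=; rewrite !mul0r mul1r ?sub0r ?subr0. Qed.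

Lemma Im_iM (z : C) : Im ('i%C * z) = Re z.
Proof. by case: z => a b /=; rewrite !mul0r mul1r ?addr0 ?add0r. Qed.

Lemma Re_rC (t : R) : Re (rC t) = t. Proof. by []. Qed.
Lemma Im_rC (t : R) : Im (rC t) = 0. Proof. by []. Qed.

Lemma normc_rC (t : R) : normc (rC t) = `|t|.
Proof. by rewrite /= expr0n /= addr0 sqrtr_sqr. Qed.

Lemma complex_decomp (z : C) : z = rC (Re z) + 'i%C * rC (Im z).
Proof. by case: z => a b /=; apply/eqP; rewrite eq_complex /= !mul0r !mul1r ?mulr0 ?subr0 ?addr0 ?add0r !eqxx. Qed.

Lemma normc_conj_scale (z : C) : z != 0 ->
  let c := (conjc z) / rC (normc z) in c * z = rC (normc z) /\ normc c = 1.
Proof.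
move=> z0 c.
have nz0 : normc z != 0 by apply: contra z0 => /eqP /ComplexField.Normc.eq0_normc ->.
have cz : conjc z * z = rC (normc z ^+ 2).
  case: z {z0 nz0 c} => a b /=; rewrite sqr_sqrtr ?addr_ge0 ?sqr_ge0 //.
  by apply/eqP; rewrite eq_complex /= mulNr opprK mulNr [a * b]mulrC addrN -!expr2 !eqxx.
have nconj : normc (conjc z) = normc z by case: z {z0 nz0 c cz} => a b /=; rewrite sqrrN.
split.
  rewrite /c mulrAC cz -rmorphV ?unitfE // -rmorphM; congr (rC _).
  by rewrite expr2 mulfK.
rewrite /c ComplexField.Normc.normcM ComplexField.Normc.normcV nconj normc_rC.
by rewrite ger0_norm ?normc_ge0 // divff.
Qed.


Section HB.
Variable s : {poly C} -> R.
Hypothesis sD : forall p q, s (p + q) <= s p + s q.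
Hypothesis sZ : forall c p, s (c *: p) = normc c * s p.

Lemma s0 : s 0 = 0.
Proof. by rewrite -(scale0r 0) sZ ComplexField.Normc.normc0 mul0r. Qed.

Lemma s_ge0 p : 0 <= s p.
Proof.
have := sD p (- p); rewrite subrr s0 -scaleN1r sZ normcN.
rewrite ComplexField.Normc.normc1 mul1r => h; lra.
Qed.


Lemma sN p : s (- p) = s p.
Proof. by rewrite -scaleN1r sZ normcN ComplexField.Normc.normc1 mul1r. Qed.

Lemma s_rC t p : 0 <= t -> s (rC t *: p) = t * s p.
Proof. by move=> t0; rewrite sZ normc_rC ger0_norm. Qed.

Lemma rCK t : t != 0 -> rC t * rC t^-1 = 1.
Proof. by move=> t0; rewrite -rmorphM divff // rmorph1. Qed.

Lemma HBstep (M : {poly C} -> Prop) (g : {poly C} -> R) (v : {poly C}) :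
  M 0 -> (forall p q, M p -> M q -> M (p + q)) ->
  (forall t p, M p -> M (rC t *: p)) ->
  (forall p q, M p -> M q -> g (p + q) = g p + g q) ->
  (forall t p, M p -> g (rC t *: p) = t * g p) ->
  (forall p, M p -> g p <= s p) ->
  exists b, forall m t, M m -> g m + t * b <= s (m + rC t *: v).
Proof.
move=> M0 MD MZ gD gZ gs.
pose A := [set s (m + v) - g m | m in M].
have key m m' : M m -> M m' -> g m' - s (m' - v) <= s (m + v) - g m.
  move=> Mm Mm'; have := gs _ (MD _ _ Mm Mm'); rewrite gD //.
  have := sD (m + v) (m' - v); rewrite addrACA subrr addr0 => h1 h2; lra.
have Ane : A !=set0 by exists (s (0 + v) - g 0), 0.
have Alb : has_lbound A.
  by exists (g 0 - s (0 - v)) => _ [m Mm <-]; exact: key.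
exists (inf A) => m t Mm.
have bup m1 : M m1 -> inf A <= s (m1 + v) - g m1.
  by move=> Mm1; apply: ge_inf => //; exists m1.
have blo m1 : M m1 -> g m1 - s (m1 - v) <= inf A.
  by move=> Mm1; apply: lb_le_inf => // _ [m2 Mm2 <-]; exact: key.
have [t0|t0|->] := ltgtP t 0; last first.
- by rewrite mul0r addr0 scale0r addr0; exact: gs.
-
  have tn0 : t != 0 by rewrite gt_eqF.
  have Mm1 := MZ t^-1 _ Mm.
  have h := bup _ Mm1; rewrite gZ // in h.
  have -> : m + rC t *: v = rC t *: (rC t^-1 *: m + v).
    by rewrite scalerDr scalerA rCK // scale1r.
  rewrite s_rC ?(ltW t0) ?(ltW u0) //.
  have : t * inf A <= t * (s (rC t^-1 *: m + v) - t^-1 * g m) by rewrite ler_pM2l.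
  by rewrite mulrBr mulrA divff // mul1r => h2; lra.
-
  pose u := - t.
  have u0 : 0 < u by rewrite /u oppr_gt0.
  have un0 : u != 0 by rewrite gt_eqF.
  have Mm1 := MZ u^-1 _ Mm.
  have h := blo _ Mm1; rewrite gZ // in h.
  have -> : m + rC t *: v = rC u *: (rC u^-1 *: m - v).
    by rewrite scalerBr scalerA rCK // scale1r /u rmorphN scaleNr opprK.
  rewrite s_rC ?(ltW t0) ?(ltW u0) //.
  have : u * (u^-1 * g m - s (rC u^-1 *: m - v)) <= u * inf A by rewrite ler_pM2l.
  rewrite mulrBr mulrA divff // mul1r => h2.
  have -> : t = - u by rewrite /u opprK.
  lra.
Qed.


Definition okL (d : nat) (L : {poly C} -> C) :=
  [/\ forall p q : {poly C}, (size p <= d)%N -> (size q <= d)%N -> L (p + q) = L p + L q,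
      forall c (p : {poly C}), (size p <= d)%N -> L (c *: p) = c * L p &
      forall p : {poly C}, (size p <= d)%N -> normc (L p) <= s p].

Lemma sizeD_le (p q : {poly C}) d : (size p <= d)%N -> (size q <= d)%N -> (size (p + q)%R <= d)%N.
Proof. by move=> hp hq; apply: leq_trans (size_polyD _ _) _; rewrite geq_max hp hq. Qed.

Lemma sizeZ_le (c : C) (p : {poly C}) d : (size p <= d)%N -> (size (c *: p)%R <= d)%N.
Proof. by move=> hp; apply: leq_trans (size_scale_leq _ _) hp. Qed.

Definition proj d (p : {poly C}) := p - p`_d *: 'X^d.

Lemma proj_size d (p : {poly C}) : (size p <= d.+1)%N -> (size (proj d p) <= d)%N.
Proof.
move=> hp; rewrite /proj; apply/leq_sizeP => j hj.
rewrite coefB coefZ coefXn; case: eqP => [->|/eqP ne]; first by rewrite mulr1 subrr.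
rewrite mulr0 subr0; apply: nth_default; apply: leq_trans hp _.
by rewrite ltn_neqAle eq_sym ne hj.
Qed.

Lemma proj_coef d (p : {poly C}) : (proj d p)`_d = 0.
Proof. by rewrite /proj coefB coefZ coefXn eqxx mulr1 subrr. Qed.

Lemma proj_small d (p : {poly C}) : (size p <= d)%N -> proj d p = p.
Proof. by move=> hp; rewrite /proj nth_default // scale0r subr0. Qed.

Lemma projD d (p q : {poly C}) : proj d (p + q) = proj d p + proj d q.
Proof. by rewrite /proj coefD scalerDl opprD addrACA. Qed.

Lemma projZ d c (p : {poly C}) : proj d (c *: p) = c *: proj d p.
Proof. by rewrite /proj coefZ scalerBr scalerA. Qed.

Lemma projE d (p : {poly C}) : p = proj d p + p`_d *: 'X^d.
Proof. by rewrite /proj subrK. Qed.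

Lemma ext_step d L : okL d L ->
  exists L', okL d.+1 L' /\ forall p : {poly C}, (size p <= d)%N -> L' p = L p.
Proof.
case=> LD LZ Ls.
pose f p := Re (L p).
pose v : {poly C} := 'X^d.
have [b1 hb1] : exists b, forall (m : {poly C}) t, (size m <= d)%N -> f m + t * b <= s (m + rC t *: v).
  apply: (HBstep (M := fun p => (size p <= d)%N)) => //.
  - by rewrite size_poly0.
  - by move=> p q hp hq /=; exact: sizeD_le.
  - by move=> t p hp /=; exact: sizeZ_le.
  - by move=> p q hp hq; rewrite /f LD // ReD.
  - by move=> t p hp; rewrite /f LZ // RerCM.
  - by move=> p hp; rewrite /f; apply: le_trans (Re_le_normc _) (Ls _ hp).
pose M1 := fun p : {poly C} => (size p <= d.+1)%N /\ Im p`_d = 0.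
pose g1 p := f (proj d p) + Re p`_d * b1.
have [b2 hb2] : exists b, forall m t, M1 m -> g1 m + t * b <= s (m + rC t *: ('i%C *: v)).
  apply: HBstep.
  - by split; rewrite ?size_poly0 // coef0.
  - move=> p q [hp ip] [hq iq]; split; first exact: sizeD_le.
    by rewrite coefD ImD ip iq addr0.
  - move=> t p [hp ip]; split; first exact: sizeZ_le.
    by rewrite coefZ ImrCM ip mulr0.
  - move=> p q [hp ip] [hq iq]; rewrite /g1 /f projD LD ?proj_size // coefD ReD ReD.
    by rewrite mulrDl addrACA.
  - move=> t p [hp ip]; rewrite /g1 /f projZ LZ ?proj_size // coefZ !RerCM.
    by rewrite mulrDr mulrA.
  - move=> p [hp ip]; rewrite /g1.
    have e : p = proj d p + rC (Re p`_d) *: v.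
      rewrite {1}(projE d p); congr (_ + _ *: _).
      by rewrite [LHS]complex_decomp ip mulr0 addr0.
    by rewrite {3}e; apply: hb1; exact: proj_size.
pose G p := f (proj d p) + Re p`_d * b1 + Im p`_d * b2.
have GD (p q : {poly C}) : (size p <= d.+1)%N -> (size q <= d.+1)%N -> G (p + q) = G p + G q.
  move=> hp hq; rewrite /G /f projD LD ?proj_size // coefD !ReD ImD.
  by rewrite !mulrDl; lra.
have GZ t (p : {poly C}) : (size p <= d.+1)%N -> G (rC t *: p) = t * G p.
  move=> hp; rewrite /G /f projZ LZ ?proj_size // coefZ RerCM RerCM ImrCM.
  by rewrite !mulrDr !mulrA.
have Gs (p : {poly C}) : (size p <= d.+1)%N -> G p <= s p.
  move=> hp.
  pose m1 := proj d p + rC (Re p`_d) *: v.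
  have m1d : m1`_d = rC (Re p`_d).
    by rewrite /m1 coefD proj_coef add0r coefZ coefXn eqxx mulr1.
  have Mm1 : M1 m1.
    split; last by rewrite m1d.
    apply: sizeD_le; first by apply: leq_trans (proj_size hp) _.
    by apply: sizeZ_le; rewrite size_polyXn.
  have pm1 : proj d m1 = proj d p.
    by rewrite /proj m1d /m1 addrK.
  have e : p = m1 + rC (Im p`_d) *: ('i%C *: v).
    rewrite /m1 -addrA {1}(projE d p); congr (_ + _).
    by rewrite scalerA -scalerDl mulrC -complex_decomp.
  have := hb2 _ (Im p`_d) Mm1; rewrite -e /g1 pm1 m1d.
  by rewrite /G.
have GDs (p q : {poly C}) : (size p <= d.+1)%N -> (size q <= d.+1)%N -> G (p - q) = G p - G q.
  move=> hp hq; have := GD p (- q) hp; rewrite size_polyN => /(_ hq).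
  rewrite -scaleN1r -[-1](rmorphN1 (real_complex R)) GZ // => ->; lra.
have iS (p : {poly C}) : (size p <= d.+1)%N -> (size ('i%C *: p)%R <= d.+1)%N by exact: sizeZ_le.
pose L' p := complex.Complex (G p) (- G ('i%C *: p)).
have ReL' p : Re (L' p) = G p by [].
have LZ' c (p : {poly C}) : (size p <= d.+1)%N -> L' (c *: p) = c * L' p.
  move=> hp; rewrite /L'.
  have e1 : c *: p = rC (Re c) *: p + rC (Im c) *: ('i%C *: p).
    by rewrite scalerA -scalerDl mulrC -complex_decomp.
  have e2 : 'i%C *: (c *: p) = rC (Re c) *: ('i%C *: p) - rC (Im c) *: p.
    rewrite e1 scalerDr !scalerA -scalerBl -scalerDl; congr (_ *: p).
    by case: (c) => a b; apply/eqP; rewrite eq_complex /=; apply/andP; split; apply/eqP; ring.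

  rewrite e2 GDs ?sizeZ_le ?iS // e1 GD ?sizeZ_le ?iS // !GZ ?iS //.
  case: c {e1 e2} => a b /=.
  apply/eqP; rewrite eq_complex /=; apply/andP; split; apply/eqP; lra.
exists L'; split; last first.
  move=> p hp; have hp1 : (size p <= d.+1)%N by apply: leq_trans hp _.
  have Gp : G p = Re (L p).
    by rewrite /G /f proj_small // nth_default // !mul0r ?addr0.
  have Gip : G ('i%C *: p) = - Im (L p).
    rewrite /G /f proj_small ?sizeZ_le // coefZ nth_default // mulr0.
    by rewrite LZ // Re_iM /= !mul0r ?addr0.
  rewrite /L' Gp Gip opprK; by case: (L p).
split.
- move=> p q hp hq; rewrite /L' GD // scalerDr GD ?iS //.
  by apply/eqP; rewrite eq_complex /= opprD !eqxx.
- exact: LZ'.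
- move=> p hp.
  have [z0|nz] := eqVneq (L' p) 0.
    by rewrite z0 ComplexField.Normc.normc0; apply: s_ge0.
  have [cz nc] := normc_conj_scale nz.
  set c := conjc (L' p) / _ in cz nc.
  have hc : L' (c *: p) = c * L' p by exact: LZ'.
  have := Gs (c *: p) (sizeZ_le _ hp); rewrite -ReL' hc cz /= sZ nc mul1r.
  done.
Qed.


Lemma ext_many d0 L : okL d0 L -> forall k,
  exists L', okL (d0 + k) L' /\ forall p : {poly C}, (size p <= d0)%N -> L' p = L p.
Proof.
move=> h; elim=> [|k [L1 [h1 a1]]]; first by exists L; rewrite addn0.
have [L2 [h2 a2]] := ext_step h1.
exists L2; rewrite addnS; split => // p hp.
by rewrite a2 ?a1 // (leq_trans hp) // leq_addr.
Qed.

Lemma okL_mono d d' L : (d' <= d)%N -> okL d L -> okL d' L.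
Proof.
move=> le [h1 h2 h3]; split.
- by move=> p q hp hq; apply: h1; [exact: leq_trans hp le | exact: leq_trans hq le].
- by move=> c p hp; apply: h2; exact: leq_trans hp le.
- by move=> p hp; apply: h3; exact: leq_trans hp le.
Qed.

Lemma cheb_functional (T : {poly C}) (a : nat) :
  T \is monic -> size T = a.+1 ->
  (forall Q : {poly C}, Q \is monic -> size Q = a.+1 -> s T <= s Q) ->
  forall D, exists L, okL D L /\
    (forall k, (k < a)%N -> L 'X^k = 0) /\ L 'X^a = rC (s T).
Proof.
move=> mT sT hmin D.
pose L0 (p : {poly C}) := p`_a * rC (s T).
have ok0 : okL a.+1 L0.
  split.
  - by move=> p q _ _; rewrite /L0 coefD mulrDl.
  - by move=> c p _; rewrite /L0 coefZ mulrA.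
  - move=> p hp; rewrite /L0 ComplexField.Normc.normcM normc_rC ger0_norm ?s_ge0 //.
    have [c0|cn0] := eqVneq p`_a 0.
      by rewrite c0 ComplexField.Normc.normc0 mul0r s_ge0.
    have sp : size p = a.+1.
      apply/eqP; rewrite eqn_leq hp /=; apply: contraR cn0; rewrite -ltnNge ltnS => h.
      by apply/eqP; apply: nth_default.
    have mq : (p`_a)^-1 *: p \is monic.
      by apply/monicP; rewrite lead_coefZ lead_coefE sp /= mulVf.
    have := hmin _ mq; rewrite size_scale ?invr_eq0 // => /(_ sp).
    rewrite sZ ComplexField.Normc.normcV => h.
    have np : 0 < normc p`_a.
      rewrite lt_def normc_ge0 andbT; apply: contra cn0 => /eqP.
      by move/ComplexField.Normc.eq0_normc => ->.
    by rewrite -ler_pdivlMl.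

have [L [okL1 agr]] := ext_many ok0 D.
exists L; split; first by apply: okL_mono okL1; rewrite leq_addl.
split.
  move=> k ka; rewrite agr; last by rewrite size_polyXn ltnS ltnW.
  by rewrite /L0 coefXn (gtn_eqF ka) mul0r.
by rewrite agr ?size_polyXn // /L0 coefXn eqxx mul1r.
Qed.

End HB.

End P3.

Set Implicit Arguments. Unset Strict Implicit. Unset Printing Implicit Defensive.
Section P4.
Variable (R : realType).
Local Notation C := (R[i]).
Local Notation normc := (@ComplexField.Normc.normc R).
Local Notation rC x := (real_complex R x).

Lemma normc_ge0' (z : C) : 0 <= normc z.
Proof. by case: z => a b /=; exact: sqrtr_ge0. Qed.

Lemma normc_sum (I : Type) (r : seq I) (F : I -> C) :
  normc (\sum_(i <- r) F i) <= \sum_(i <- r) normc (F i).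
Proof.
elim: r => [|i r IH]; first by rewrite !big_nil ComplexField.Normc.normc0.
rewrite !big_cons; apply: le_trans (le_normcD _ _) _; exact: lerD.
Qed.

Lemma normc_rC' (t : R) : normc (rC t) = `|t|.
Proof. by rewrite /= expr0n /= addr0 sqrtr_sqr. Qed.

Lemma normc_exp (z : C) k : normc (z ^+ k) = normc z ^+ k.
Proof.
elim: k => [|k IH]; first by rewrite !expr0 ComplexField.Normc.normc1.
by rewrite !exprS ComplexField.Normc.normcM IH.
Qed.

Lemma poly_bound (p : {poly C}) (B x : R) : `|x| <= B ->
  normc p.[rC x] <= \sum_(i < size p) normc p`_i * B ^+ i.
Proof.
move=> xB; rewrite horner_coef; apply: le_trans (normc_sum _ _) _.
apply: ler_sum => i _; rewrite ComplexField.Normc.normcM normc_exp normc_rC'.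
apply: ler_wpM2l; first exact: normc_ge0'.
have B0 : 0 <= B by apply: le_trans xB.
by apply: lerXn2r; rewrite ?nnegrE.
Qed.

Section Snorm.
Variables (K : set R) (ww : R -> R) (M B : R).
Hypothesis Kne : K !=set0.
Hypothesis KB : forall x, K x -> `|x| <= B.
Hypothesis ww0 : forall x, K x -> 0 <= ww x.
Hypothesis wwM : forall x, K x -> ww x <= M.

Local Notation s := (wnorm1 K ww).

Lemma s_ub (p : {poly C}) : has_ubound [set ww x * normc p.[rC x] | x in K].
Proof.
exists (M * \sum_(i < size p) normc p`_i * B ^+ i) => _ [x Kx <-].
apply: ler_pM; [exact: ww0|exact: normc_ge0'|exact: wwM|exact: poly_bound (KB Kx)].
Qed.

Lemma s_pt (p : {poly C}) x : K x -> ww x * normc p.[rC x] <= s p.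
Proof. by move=> Kx; apply: ub_le_sup (s_ub p) _ _; exists x. Qed.

Lemma s_nonneg (p : {poly C}) : 0 <= s p.
Proof.
case: Kne => x Kx; apply: le_trans (s_pt p Kx).
by apply: mulr_ge0; [exact: ww0|exact: normc_ge0'].
Qed.

Lemma s_le (p : {poly C}) (b : R) : (forall x, K x -> ww x * normc p.[rC x] <= b) -> s p <= b.
Proof.
move=> h; apply: ge_sup; first by case: Kne => x Kx; exists (ww x * normc p.[rC x]), x.
by move=> _ [x Kx <-]; exact: h.
Qed.

Lemma sD (p q : {poly C}) : s (p + q) <= s p + s q.
Proof.
apply: s_le => x Kx; rewrite hornerD.
have h1 : ww x * normc (p.[rC x] + q.[rC x]) <= ww x * (normc p.[rC x] + normc q.[rC x]).
  by apply: ler_wpM2l; [exact: ww0|exact: le_normcD].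
apply: le_trans h1 _.
by rewrite mulrDr; apply: lerD; exact: s_pt.
Qed.

Lemma sZle (c : C) (p : {poly C}) : s (c *: p) <= normc c * s p.
Proof.
apply: s_le => x Kx; rewrite hornerZ ComplexField.Normc.normcM mulrCA.
by apply: ler_wpM2l; [exact: normc_ge0'|exact: s_pt].
Qed.

Lemma sZ (c : C) (p : {poly C}) : s (c *: p) = normc c * s p.
Proof.
apply/eqP; rewrite eq_le sZle /=.
have [->|c0] := eqVneq c 0.
  by rewrite ComplexField.Normc.normc0 mul0r; exact: s_nonneg.
have nc : 0 < normc c.
  rewrite lt_def normc_ge0' andbT; apply: contra c0 => /eqP.
  by move/ComplexField.Normc.eq0_normc => ->.
have := sZle c^-1 (c *: p); rewrite scalerA mulVf // scale1r ComplexField.Normc.normcV.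
by rewrite ler_pdivlMl.
Qed.

End Snorm.
End P4.

Set Implicit Arguments. Unset Strict Implicit. Unset Printing Implicit Defensive.
Section P5.
Variable (R : realType) (n : nat).
Local Notation C := (R[i]).
Local Notation normc := (@ComplexField.Normc.normc R).
Local Notation rC x := (real_complex R x).

Variables (K : 'I_n -> set R) (ww : 'I_n -> R -> R) (M B : 'I_n -> R).
Hypothesis Kne : forall j, K j !=set0.
Hypothesis KB : forall j x, K j x -> `|x| <= B j.
Hypothesis ww0 : forall j x, K j x -> 0 <= ww j x.
Hypothesis wwM : forall j x, K j x -> ww j x <= M j.

Local Notation W := (fun x : 'I_n -> R => \prod_(j < n) ww j (x j)).
Local Notation S P := (wnormn K W P).

Lemma prod_ge0 (x : 'I_n -> R) (P : pred 'I_n) : (forall j, P j -> K j (x j)) ->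
  0 <= \prod_(j < n | P j) ww j (x j).
Proof. by move=> h; apply: prodr_ge0 => j Pj; apply: ww0; apply: h. Qed.

Lemma Sn_ub (P : mpoly.mpoly n C) :
  has_ubound [set W x * normc (mpoly.meval (fun j => rC (x j)) P) | x in Kprod K].
Proof.
exists ((\prod_(j < n) M j) *
   \sum_(b <- mpoly.msupp P) normc P@_b * \prod_(j < n) B j ^+ b j).
move=> _ [x Kx <-].
apply: ler_pM.
- by apply: prod_ge0 => j _; apply: Kx.
- exact: normc_ge0'.
- apply: ler_prod => j _; apply/andP; split; [exact: ww0 | exact: wwM].
rewrite mevalE; apply: le_trans (normc_sum _ _) _.
apply: ler_sum => b _; rewrite ComplexField.Normc.normcM.
apply: ler_wpM2l; first exact: normc_ge0'.
elim/big_rec2: _ => [|j y1 y2 _ h]; first by rewrite ComplexField.Normc.normc1.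
rewrite ComplexField.Normc.normcM normc_exp normc_rC'.
apply: ler_pM; [by rewrite exprn_ge0|exact: normc_ge0'| |exact: h].
have B0 : 0 <= B j by apply: le_trans (KB (Kx j)).
by apply: lerXn2r; rewrite ?nnegrE // KB.
Qed.

Lemma Sn_pt (P : mpoly.mpoly n C) x : Kprod K x ->
  W x * normc (mpoly.meval (fun j => rC (x j)) P) <= S P.
Proof. by move=> Kx; apply: ub_le_sup (Sn_ub P) _ _; exists x. Qed.


Lemma size_sum_le (I : eqType) (r : seq I) (F : I -> {poly C}) D :
  (forall i, i \in r -> (size (F i) <= D)%N) -> (size (\sum_(i <- r) F i)%R <= D)%N.
Proof.
elim: r => [|i r1 IH] h; first by rewrite big_nil size_poly0.
rewrite big_cons; apply: sizeD_le; first by apply: h; rewrite inE eqxx.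
by apply: IH => j jr; apply: h; rewrite inE jr orbT.
Qed.

Lemma okL_sum (s : {poly C} -> R) D (L : {poly C} -> C) (I : eqType) (r : seq I)
  (F : I -> {poly C}) : okL s D L -> (forall i, i \in r -> (size (F i) <= D)%N) ->
  L (\sum_(i <- r) F i) = \sum_(i <- r) L (F i).
Proof.
case=> LD LZ _.
have sz : forall r : seq I, (forall i, i \in r -> (size (F i) <= D)%N) ->
    (size (\sum_(i <- r) F i)%R <= D)%N.
  elim=> [|i r1 IH] h; first by rewrite big_nil size_poly0.
  rewrite big_cons; apply: sizeD_le; first by apply: h; rewrite inE eqxx.
  by apply: IH => j jr; apply: h; rewrite inE jr orbT.
elim: r => [|i r IH] h.
  by rewrite !big_nil -(scale0r (0 : {poly C})) LZ ?mul0r // size_poly0.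
have h' : forall j, j \in r -> (size (F j) <= D)%N.
  by move=> j jr; apply: h; rewrite inE jr orbT.
rewrite !big_cons LD ?IH //; first by apply: h; rewrite inE eqxx.
exact: sz.
Qed.

Section Core.
Variables (L : 'I_n -> {poly C} -> C) (D : nat).
Hypothesis Lok : forall j, okL (wnorm1 (K j) (ww j)) D (L j).
Variable P : mpoly.mpoly n C.
Hypothesis sizeP : forall b, b \in mpoly.msupp P -> forall j, (b j < D)%N.

Definition term k (x : 'I_n -> R) (b : mpoly.multinom n) :=
  \prod_(j < n) (if (j < k)%N then L j 'X^(b j) else rC (x j) ^+ b j).
Definition Lam k x := \sum_(b <- mpoly.msupp P) P@_b * term k x b.
Definition wp k (x : 'I_n -> R) := \prod_(j < n | (k <= j)%N) ww j (x j).

Lemma core k : (k <= n)%N -> forall x, (forall j : 'I_n, (k <= j)%N -> K j (x j)) ->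
  wp k x * normc (Lam k x) <= S P.
Proof.
elim: k => [|k IH] kn x hx.
  have -> : wp 0 x = W x by apply: eq_bigl.
  have -> : Lam 0 x = mpoly.meval (fun j => rC (x j)) P.
    by rewrite mevalE; apply: eq_bigr => b _; congr (_ * _); apply: eq_bigr.
  by apply: Sn_pt => j; apply: hx.
pose j0 : 'I_n := Ordinal kn.
pose x' t := fun j => if j == j0 then t else x j.
pose rest b := \prod_(j < n | j != j0) (if (j < k)%N then L j 'X^(b j) else rC (x j) ^+ b j).
have ne_k (j : 'I_n) : j != j0 -> (j < k.+1)%N = (j < k)%N.
  move=> ne; rewrite ltnS leq_eqVlt; case: eqP => // e.
  by case/eqP: ne; apply: val_inj.
have F1 b : term k.+1 x b = L j0 'X^(b j0) * rest b.
  rewrite /term (bigD1 j0) //= ltnSn; congr (_ * _); apply: eq_bigr => j ne.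
  by rewrite ne_k.
have F2 t b : term k (x' t) b = rC t ^+ b j0 * rest b.
  rewrite /term (bigD1 j0) //= ltnn /x' eqxx; congr (_ * _); apply: eq_bigr => j ne.
  by rewrite (negbTE ne).
have F3 t : wp k (x' t) = ww j0 t * wp k.+1 x.
  rewrite /wp (bigD1 j0) //= /x' eqxx; congr (_ * _).
  apply: eq_big => j.
    case: eqP => [->|/eqP ne]; first by rewrite ltnn andbF.
    have nk : (nat_of_ord j != k).
      by apply: contra ne => /eqP e; apply/eqP; apply: val_inj.
    by rewrite andbT ltn_neqAle eq_sym nk.
  by move=> /andP [_ ne]; rewrite (negbTE ne).
pose q := \sum_(b <- mpoly.msupp P) (P@_b * rest b) *: ('X^(b j0) : {poly C}).
have F4 : Lam k.+1 x = L j0 q.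
  rewrite /q (okL_sum (Lok j0)); last first.
    by move=> b bP; apply: sizeZ_le; rewrite size_polyXn; exact: sizeP.
  apply: eq_big_seq => b bP; case: (Lok j0) => _ LZ _.
  rewrite LZ; last by rewrite size_polyXn; exact: sizeP.
  by rewrite F1 mulrA mulrAC.
have F5 t : q.[rC t] = Lam k (x' t).
  rewrite /q horner_sum; apply: eq_bigr => b _.
  by rewrite hornerZ hornerXn F2 -mulrA [rest b * _]mulrC.
have c0 : 0 <= wp k.+1 x by apply: prod_ge0 => j; apply: hx.
rewrite F4.
case: (Lok j0) => _ _ Lb.
have qD : (size q <= D)%N.
  apply: size_sum_le => b bP; apply: sizeZ_le; rewrite size_polyXn; exact: sizeP.
apply: le_trans (ler_wpM2l c0 (Lb _ qD)) _.
have e : wp k.+1 x = normc (rC (wp k.+1 x)) by rewrite normc_rC' ger0_norm.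
rewrite {1}e -(sZ (Kne j0) (@KB j0) (@ww0 j0) (@wwM j0)).
apply: (s_le (Kne j0)) => t Kt.
rewrite hornerZ ComplexField.Normc.normcM -e mulrA -F3 F5.
apply: IH; first exact: ltnW.
move=> j kj; rewrite /x'; case: eqP => [->|/eqP ne] //.
apply: hx; rewrite ltn_neqAle kj andbT; apply: contra ne => /eqP e2.
by apply/eqP; apply: val_inj.
Qed.

Lemma core_final :
  normc (\sum_(b <- mpoly.msupp P) P@_b * \prod_(j < n) L j 'X^(b j)) <= S P.
Proof.
have := core (leqnn n) (x := fun _ => 0).
have -> : wp n (fun _ => 0) = 1.
  by rewrite /wp big_pred0 // => j; rewrite leqNgt ltn_ord.
rewrite mul1r; have -> : Lam n (fun _ => 0) =
    \sum_(b <- mpoly.msupp P) P@_b * \prod_(j < n) L j 'X^(b j).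
  by apply: eq_bigr => b _; congr (_ * _); apply: eq_bigr => j _; rewrite ltn_ord.
by apply => j; rewrite leqNgt ltn_ord.
Qed.
End Core.

End P5.

Set Implicit Arguments. Unset Strict Implicit. Unset Printing Implicit Defensive.

Lemma compact_B (R : realType) (A : set R) : compact A -> exists B, forall x, A x -> `|x| <= B.
Proof.
move=> /compact_bounded [M0 [_ hM]].
by exists (M0 + 1) => x Ax; apply: (hM (M0 + 1)) => //; rewrite ltrDl.
Qed.

Lemma nonpolar_ne (R : realType) (A : set R) : nonpolar A -> A !=set0.
Proof.
case=> mu [hA _]; apply/set0P/eqP => A0.
by move: hA; rewrite /prob_on A0 setC0 probability_setT => /eqP; rewrite eqe oner_eq0.
Qed.

Lemma meval_Fj (R : realType) n (T : {poly R[i]}) (j : 'I_n) (v : 'I_n -> R[i]) :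
  mpoly.meval v ((map_poly (@mpoly.mpolyC n R[i]) T).[mpoly.mpolyX R[i] (mpoly.mnm1 j)])
  = T.[v j].
Proof.
rewrite F_expand raddf_sum /= horner_coef; apply: eq_bigr => k _.
rewrite mevalZ mevalX; congr (_ * _).
rewrite (bigD1 j) //= big1 ?mulr1 ?mulmnE ?mnm1E ?eqxx ?mul1n //.
by move=> i ne; rewrite mulmnE mnm1E eq_sym (negbTE ne) mul0n expr0.
Qed.

Lemma prec_lt (n : nat) (a b : mpoly.multinom n) : mprec b a -> exists j, (b j < a j)%N.
Proof.
move=> h; apply/existsP; apply: contraLR h => /existsPn hb.
have ge : forall j, (a j <= b j)%N by move=> j; move: (hb j); rewrite -leqNgt.
have dle : (mpoly.mdeg a <= mpoly.mdeg b)%N by rewrite !mdegE; apply: leq_sum => j _.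
rewrite /mprec negb_or -leqNgt dle /= negb_and; apply/orP.
case: (eqVneq (mpoly.mdeg b) (mpoly.mdeg a)) => [e|]; last by left.
right; apply/negP => /existsP [l /andP [lt _]].
have : (mpoly.mdeg a < mpoly.mdeg b)%N.
  rewrite !mdegE (bigD1 l) //= [X in (_ < X)%N](bigD1 l) //= -addSn leq_add //.
  by apply: leq_sum => j _.
by rewrite e ltnn.
Qed.

Unset Implicit Arguments.
Theorem mainTheorem12 (R : realType) (n : nat) (K : 'I_n -> set R)
    (w : 'I_n -> R -> R) (alpha : mpoly.multinom n)
    (T : 'I_n -> {poly R[i]}) :
  (forall j, compact (K j)) ->
  (forall j, nonpolar (K j)) ->
  (forall j x, K j x -> 0 <= w j x) ->
  (forall j, exists M : R, forall x, K j x -> w j x <= M) ->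
  (forall j, measurable_fun (K j) (w j)) ->
  (forall j, exists muK : probability R R,
      equilibrium_measure (K j) muK /\ (0 < S_weight (K j) (w j) muK)%E) ->
  (forall j, T j \is monic /\ size (T j) = (tnth (mpoly.multinom_val alpha) j).+1 /\
     forall Q : {poly R[i]}, Q \is monic -> size Q = (tnth (mpoly.multinom_val alpha) j).+1 ->
       wnorm1 (K j) (what (K j) (w j)) (T j)
         <= wnorm1 (K j) (what (K j) (w j)) Q) ->
  let W := fun x : 'I_n -> R => \prod_(j < n) what (K j) (w j) (x j) in
  let Q := cheb_product T in
  Pset alpha Q /\
  wnormn K W Q = inf [set wnormn K W P | P in Pset alpha].
Proof.
move=> hK hnp hw0 hwM _ _ hT W Q.
have Kne j : K j !=set0 := nonpolar_ne (hnp j).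
pose B j := projT1 (cid (compact_B (hK j))).
have KB j x : K j x -> `|x| <= B j := projT2 (cid (compact_B (hK j))) x.
pose M j := projT1 (cid (hwM j)).
have hM j x : K j x -> w j x <= M j := projT2 (cid (hwM j)) x.
pose ww j := what (K j) (w j).
have ww0 j x : K j x -> 0 <= ww j x.
  by move=> Kx; case/andP: (what_bounds (hw0 j) (hM j) Kx).
have wwM j x : K j x -> ww j x <= M j.
  by move=> Kx; case/andP: (what_bounds (hw0 j) (hM j) Kx).
pose s j := wnorm1 (K j) (ww j).
pose N j := s j (T j).
have QP : Pset alpha Q by apply: cheb_Pset => j; case: (hT j) => [? []].
have lower : forall P, Pset alpha P -> \prod_(j < n) N j <= wnormn K W P.
  move=> P [P1 P0].
  pose D := mpoly.msize P.
  have sizeP : forall b, b \in mpoly.msupp P -> forall j, (b j < D)%N.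
    move=> b bP j; apply: leq_ltn_trans (msize_mdeg_lt bP).
    by rewrite mdegE (bigD1 j) //= leq_addr.
  have Lex j := cid (cheb_functional (sD (Kne j) (@KB j) (@ww0 j) (@wwM j))
     (sZ (Kne j) (@KB j) (@ww0 j) (@wwM j)) (proj1 (hT j)) (proj1 (proj2 (hT j)))
     (proj2 (proj2 (hT j))) D).
  pose L j := projT1 (Lex j).
  have Lok j : okL (s j) D (L j) := proj1 (projT2 (Lex j)).
  have L0 j k : (k < tnth (mpoly.multinom_val alpha) j)%N -> L j 'X^k = 0 :=
    proj1 (proj2 (projT2 (Lex j))) k.
  have La j : L j 'X^(tnth (mpoly.multinom_val alpha) j) = real_complex R (N j) :=
    proj2 (proj2 (projT2 (Lex j))).
  have cf := core_final Kne KB ww0 wwM Lok sizeP.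
  have aP : alpha \in mpoly.msupp P by rewrite mcoeff_msupp P1 oner_eq0.
  rewrite (bigD1_seq alpha) ?msupp_uniq //= in cf.
  have r0 : \sum_(b <- mpoly.msupp P | b != alpha) P@_b * \prod_(j < n) L j 'X^(b j) = 0.
    rewrite big_seq_cond; apply: big1 => b /andP [bP nb].
    have pb : mprec b alpha.
      by apply/negPn/negP => np; move: bP; rewrite mcoeff_msupp P0 ?eqxx.
    have [j lt] := prec_lt pb.
    by rewrite (bigD1 j) //= L0 // mul0r mulr0.
  rewrite r0 addr0 P1 mul1r in cf.
  have e : \prod_(j < n) L j 'X^(alpha j) = real_complex R (\prod_(j < n) N j).
    by rewrite rmorph_prod; apply: eq_bigr => j _; exact: La.
  rewrite e normc_rC' ger0_norm // in cf.
  by apply: prodr_ge0 => j _; apply: s_nonneg (Kne j) (@KB j) (@ww0 j) (@wwM j) _.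
have upper : wnormn K W Q <= \prod_(j < n) N j.
  apply: ge_sup.
    pose x0 j := projT1 (cid (Kne j)).
    by exists (W x0 * ComplexField.Normc.normc
       (mpoly.meval (fun j => real_complex R (x0 j)) Q)), x0 => // j; exact: projT2 (cid (Kne j)).
  move=> _ [x Kx <-].
  rewrite /Q /cheb_product rmorph_prod /=.
  rewrite (big_morph _ (@ComplexField.Normc.normcM R) (ComplexField.Normc.normc1 R)).
  rewrite /W -big_split /=; apply: ler_prod => j _.
  rewrite meval_Fj; apply/andP; split.
    by apply: mulr_ge0; [exact: ww0 (Kx j) | exact: normc_ge0'].
  exact: (s_pt (@KB j) (@ww0 j) (@wwM j) _ (Kx j)).
have eqQ : wnormn K W Q = \prod_(j < n) N j.
  by apply/eqP; rewrite eq_le upper lower.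
split => //.
apply/eqP; rewrite eq_le; apply/andP; split.
  apply: lb_le_inf; first by exists (wnormn K W Q), Q.
  by move=> _ [P PP <-]; rewrite eqQ; exact: lower.
apply: ge_inf; last by exists Q.
by exists (wnormn K W Q) => _ [P PP <-]; rewrite eqQ; exact: lower.
Qed.
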